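(* Let $G=GL_n(\mathbb C)$, $B$ the upper triangular invertible matrices, $U^-$ the lower triangular unipotent matrices, $W=S_n$ realized by permutation matrices, and let $S$ be a diagonal matrix in $\mathfrak{gl}_n(\mathbb C)$. Let $H_\Delta=\{A=[a_{ij}]\in\mathfrak{gl}_n(\mathbb C): a_{ij}=0\text{ whenever } i>j+1\}$ be the standard Hessenberg space and $\mathcal B(S)=\{gB\in G/B: g^{-1}Sg\in H_\Delta\}$. For $w\in W$, let $u$ be the generic element of $U^-$ with coordinates $x_{ij}$ ($i>j$), let $A=u^{-1}w^{-1}Swu$, whose entries $a_{ij}$ are polynomials in $\mathbb C[U^-]=\mathbb C[x_{ij}:i>j]$, and let $I_{w,\mathcal B(S)}=\langle a_{ij}: i>j+1\rangle\subseteq\mathbb C[U^-]$. Then for each $w\in W$, $I_{w,\mathcal B(S)}$ has a Gröbner basis with square-free lead terms (for a suitable monomial order) and is therefore radical; in particular $I_{w,\mathcal B(S)}$ is the ideal of the patch $\mathcal N_{w,\mathcal B(S)}=wB_-B/B\cap\mathcal B(S)$, identified with $\{wu\in wU^-: wuB\in\mathcal B(S)\}\cong\{u\in U^-: u^{-1}w^{-1}Swu\in H_\Delta\}$.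
   Context: $B_-$ denotes the invertible lower triangular matrices; $wB_-B/B$ is an affine open neighborhood of $wB$ in $G/B$, isomorphic to $wU^-$ via $wu\mapsto wuB$. *)

(* Defs.v *)
From HB Require Import structures.
From mathcomp Require Import all_boot all_order all_fingroup all_algebra.
From mathcomp Require Import reals.
From mathcomp.real_closed Require Import complex.
From mathcomp Require Import mpoly.

Set Implicit Arguments.
Unset Strict Implicit.
Unset Printing Implicit Defensive.
Import Order.TTheory GRing.Theory Num.Theory.
Local Open Scope ring_scope.

(* Index set of the coordinates x_ij (i > j) of U^- *)
Definition Lidx (n : nat) := {p : 'I_n * 'I_n | (p.2 < p.1)%N}.
Definition nv (n : nat) : nat := #|{: Lidx n}|.

Section Defs.
Variable K : fieldType.

(* generic lower unitriangular matrix u with entries x_ij = 'X_(index of (i,j)) *)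
Definition genU (n : nat) : 'M[{mpoly K[nv n]}]_n :=
  \matrix_(i, j) match @insub _ (fun p : 'I_n * 'I_n => (p.2 < p.1)%N) (Lidx n) (i, j) with
                 | Some p => 'X_(enum_rank p)
                 | None => (i == j)%:R
                 end.

Definition evalU (n : nat) (x : 'I_(nv n) -> K) : 'M[K]_n :=
  \matrix_(i, j) match @insub _ (fun p : 'I_n * 'I_n => (p.2 < p.1)%N) (Lidx n) (i, j) with
                 | Some p => x (enum_rank p)
                 | None => (i == j)%:R
                 end.

Definition Amat (n : nat) (S : 'M[K]_n) (w : 'S_n) : 'M[{mpoly K[nv n]}]_n :=
  let Wm := perm_mx w in
  invmx (genU n) *m invmx Wm *m map_mx (fun c => c%:MP) S *m Wm *m genU n.

Definition in_HDelta (n : nat) (A : 'M[K]_n) : Prop :=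
  forall i j : 'I_n, (j.+1 < i)%N -> A i j = 0.

Definition ideal_gen (T : comPzRingType) (P : pred T) (f : T) : Prop :=
  exists s : seq (T * T), all (fun p => P p.2) s /\ f = \sum_(p <- s) p.1 * p.2.

Definition Iw (n : nat) (S : 'M[K]_n) (w : 'S_n) : {mpoly K[nv n]} -> Prop :=
  ideal_gen [pred g | [exists i : 'I_n, exists j : 'I_n,
                        (j.+1 < i)%N && (g == Amat S w i j)]].

(* the patch N_{w,B(S)} identified with {u in U^- : u^{-1} w^{-1} S w u in H_Delta} *)
Definition patch (n : nat) (S : 'M[K]_n) (w : 'S_n) (x : 'I_(nv n) -> K) : Prop :=
  let u := evalU x in
  let Wm := perm_mx w in
  in_HDelta (invmx u *m invmx Wm *m S *m Wm *m u).

Definition vanishing_ideal (k : nat) (V : ('I_k -> K) -> Prop) (f : {mpoly K[k]}) : Prop :=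
  forall x, V x -> f.@[x] = 0.

Definition radical_ideal (T : comPzRingType) (I : T -> Prop) : Prop :=
  forall (f : T) (m : nat), I (f ^+ m) -> I f.

End Defs.

Definition monomial_order (k : nat) (le : rel 'X_{1..k}) : Prop :=
  [/\ reflexive le, antisymmetric le, transitive le, total le &
      ((forall a b c, le a b -> le (mnm_add a c) (mnm_add b c))
    /\ (forall a, le (@mnm0 k) a))].

Definition is_lead (K : fieldType) (k : nat) (le : rel 'X_{1..k}) (p : {mpoly K[k]})
  (m : 'X_{1..k}) : Prop :=
  m \in msupp p /\ (forall m', m' \in msupp p -> le m' m).

Definition groebner_basis (K : fieldType) (k : nat) (le : rel 'X_{1..k})
  (I : {mpoly K[k]} -> Prop) (G : seq {mpoly K[k]}) : Prop :=
  (forall g, g \in G -> I g) /\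
  (forall f, I f -> f != 0 ->
     exists2 g, g \in G &
       exists mg mf, [/\ is_lead le g mg, is_lead le f mf & lem mg mf]).

Definition squarefree_leads (K : fieldType) (k : nat) (le : rel 'X_{1..k})
  (G : seq {mpoly K[k]}) : Prop :=
  forall g, g \in G -> forall mg, is_lead le g mg -> forall i, (mg i <= 1)%N.

(* Main.v *)
Require Import Defs.
From HB Require Import structures.
From mathcomp Require Import all_boot all_order all_fingroup all_algebra.
From mathcomp Require Import reals.
From mathcomp.real_closed Require Import complex.
From mathcomp Require Import mpoly.
From mathcomp Require Import zify ring.
Local Open Scope ring_scope.

Module A.
Set Implicit Arguments.
Unset Strict Implicit.
Unset Printing Implicit Defensive.
Import Order.TTheory GRing.Theory Num.Theory.

Section IdealGen.
Variable T : comPzRingType.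
Implicit Types (P Q : pred T).

Lemma ig0 P : ideal_gen P 0.
Proof. by exists [::]; rewrite big_nil. Qed.

Lemma igD P a b : ideal_gen P a -> ideal_gen P b -> ideal_gen P (a + b).
Proof.
move=> [s [hs ->]] [t [ht ->]]; exists (s ++ t).
by rewrite all_cat hs ht big_cat.
Qed.

Lemma igM P c a : ideal_gen P a -> ideal_gen P (c * a).
Proof.
move=> [s [hs ->]]; exists [seq (c * p.1, p.2) | p <- s]; split.
  by rewrite all_map.
by rewrite big_map mulr_sumr; apply: eq_bigr => p _; rewrite mulrA.
Qed.

Lemma igN P a : ideal_gen P a -> ideal_gen P (- a).
Proof. by move=> h; rewrite -mulN1r; apply: igM. Qed.

Lemma igB P a b : ideal_gen P a -> ideal_gen P b -> ideal_gen P (a - b).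
Proof. by move=> ha hb; apply: igD => //; apply: igN. Qed.

Lemma igG P g : P g -> ideal_gen P g.
Proof. by move=> h; exists [:: (1, g)]; rewrite /= h big_seq1 mul1r. Qed.

Lemma ig_sum P (I : Type) (r : seq I) (F : I -> T) :
  (forall i, ideal_gen P (F i)) -> ideal_gen P (\sum_(i <- r) F i).
Proof.
move=> h; elim: r => [|a r IH]; first by rewrite big_nil; exact: ig0.
by rewrite big_cons; apply: igD.
Qed.

Lemma ig_trans P (Q' : pred T) f :
  (forall g, P g -> ideal_gen Q' g) -> ideal_gen P f -> ideal_gen Q' f.
Proof.
move=> h [s [hs ->]]; elim: s hs => [|p s IH] /=; first by move=> _; rewrite big_nil; apply: ig0.
move=> /andP[hp hs]; rewrite big_cons; apply: igD; last exact: IH.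
by apply: igM; apply: h.
Qed.
End IdealGen.

Lemma ig_big (T : comPzRingType) (P : pred T) (I : Type) (r : seq I) (Q : pred I) (F : I -> T) :
  (forall i, Q i -> ideal_gen P (F i)) -> ideal_gen P (\sum_(i <- r | Q i) F i).
Proof. by move=> h; apply: big_ind => //; [exact: ig0 | exact: igD]. Qed.

End A.
Import A.

Module B.
Set Implicit Arguments.
Unset Strict Implicit.
Unset Printing Implicit Defensive.
Import Order.TTheory GRing.Theory Num.Theory.

Section GenMx.
Variables (T : comUnitRingType) (n : nat).

Definition lunit (u : 'M[T]_n) :=
  (forall i, u i i = 1) /\ (forall i j : 'I_n, (i < j)%N -> u i j = 0).

Definition nxt (j : 'I_n) : 'I_n := insubd j j.+1.

Lemma nxtE (j : 'I_n) : (j.+1 < n)%N -> nat_of_ord (nxt j) = j.+1.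
Proof. by move=> h; rewrite /nxt val_insubd h. Qed.

Definition fgen (u : 'M[T]_n) (d : 'I_n -> T) (i j : 'I_n) : T :=
  (d i - d j) * u i j - (d (nxt j) - d j) * (u (nxt j) j * u i (nxt j)).

Lemma sum_only (F : 'I_n -> T) j : (forall l, l != j -> F l = 0) ->
  \sum_l F l = F j.
Proof.
move=> h; rewrite (bigD1 j) //= big1 ?addr0 // => l /h //.
Qed.

Lemma lunit_det u : lunit u -> \det u = 1.
Proof.
move=> [h1 h2]; rewrite det_trig; last by apply/is_trig_mxP.
by rewrite big1.
Qed.

Lemma lunit_unit u : lunit u -> u \in unitmx.
Proof. by move=> h; rewrite unitmxE lunit_det // unitr1. Qed.

Lemma lunit_inv u : lunit u -> lunit (invmx u).
Proof.
move=> hu; have hU := lunit_unit hu; case: hu => h1 h2.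
set v := invmx u.
have E : forall i j, \sum_l v i l * u l j = (i == j)%:R.
  by move=> i j; have := congr1 (fun X : 'M[T]_n => X i j) (mulVmx hU); rewrite !mxE.
have Z : forall i j : 'I_n, (i < j)%N -> v i j = 0.
  move=> i.
  suff : forall k (j : 'I_n), (n - k <= j)%N -> (i < j)%N -> v i j = 0.
    by move=> H j; apply: (H n); rewrite subnn.
  elim=> [|k IH] j.
    by rewrite subn0 => /(leq_trans (ltn_ord j)); rewrite ltnn.
  move=> hj hij.
  have hne : (i == j) = false by apply/negbTE; rewrite -val_eqE /= neq_ltn hij.
  have := E i j; rewrite hne (bigD1 j) //= h1 mulr1 big1 ?addr0 //.
  move=> l hl; case: (ltngtP l j) => hlj.
  - by rewrite h2 ?mulr0.
  - by rewrite IH ?mul0r //; [lia | apply: ltn_trans hlj].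
  - by move: hl; rewrite (val_inj hlj) eqxx.
split => //.
move=> i; have := E i i; rewrite eqxx (bigD1 i) //= h1 mulr1 big1 ?addr0 //.
move=> l hl; case: (ltngtP l i) => hli.
- by rewrite h2 ?mulr0.
- by rewrite Z ?mul0r.
- by move: hl; rewrite (val_inj hli) eqxx.
Qed.

Lemma trig_mulE (A B : 'M[T]_n) :
  (forall i j : 'I_n, (i < j)%N -> A i j = 0) ->
  (forall i j : 'I_n, (i < j)%N -> B i j = 0) ->
  (forall i j : 'I_n, (i < j)%N -> (A *m B) i j = 0) /\
  (forall i, (A *m B) i i = A i i * B i i).
Proof.
move=> hA hB; split.
  move=> i j hij; rewrite mxE big1 // => l _.
  case: (ltnP i l) => hil; first by rewrite hA ?mul0r.
  by rewrite hB ?mulr0 //; apply: leq_ltn_trans hij.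
move=> i; rewrite mxE (sum_only (j := i)) // => l hl.
case: (ltngtP l i) => hli.
- by rewrite hB ?mulr0.
- by rewrite hA ?mul0r.
- by move: hl; rewrite (val_inj hli) eqxx.
Qed.

Lemma split3 (F : 'I_n -> T) (j : 'I_n) : (j.+1 < n)%N ->
  (forall l : 'I_n, (l < j)%N -> F l = 0) ->
  \sum_l F l = F j + F (nxt j) + \sum_(l : 'I_n | (j.+1 < l)%N) F l.
Proof.
move=> hn hF; rewrite (bigID (fun l : 'I_n => (j.+1 < l)%N)) /= addrC; congr (_ + _).
have hj : j != nxt j by rewrite -val_eqE /= nxtE // neq_ltn ltnSn.
rewrite (bigD1 j) /=; last by apply/negP; lia.
rewrite (bigD1 (nxt j)) /=; last by rewrite nxtE // ltnn eq_sym hj.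
rewrite addrA big1 ?addr0 // => l /andP[/andP[hl1 hl2] hl3].
apply: hF; move: hl1 hl2 hl3; rewrite -!val_eqE /= nxtE //; lia.
Qed.

Variables (u M : 'M[T]_n) (d : 'I_n -> T).
Hypothesis hu : lunit u.
Hypothesis hM : forall i j, M i j = if i == j then d i else 0.

Let v := invmx u.
Let A := invmx u *m M *m u.

Lemma uA : u *m A = M *m u.
Proof.
by rewrite /A !mulmxA mulmxV ?mul1mx //; apply: lunit_unit.
Qed.

Lemma Mu i j : (M *m u) i j = d i * u i j.
Proof.
rewrite mxE (sum_only (j := i)) ?hM ?eqxx // => l hl.
by rewrite hM eq_sym (negbTE hl) mul0r.
Qed.

Lemma A_trig : (forall i j : 'I_n, (i < j)%N -> A i j = 0) /\ (forall i, A i i = d i).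
Proof.
have [vd vt] := lunit_inv hu.
have hMt : forall i j : 'I_n, (i < j)%N -> M i j = 0.
  move=> i j hij; rewrite hM; case: eqP => // hh.
  by move: hij; rewrite hh ltnn.
have [t1 d1] := trig_mulE vt hMt.
have [t2 d2] := trig_mulE t1 hu.2.
split => // i; rewrite /A d2 d1 vd hM eqxx hu.1; ring.
Qed.

Lemma fgen_sum (i j : 'I_n) : (j.+1 < i)%N ->
  fgen u d i j = \sum_(l : 'I_n | (j.+1 < l)%N) u i l * A l j.
Proof.
move=> hij; have hn : (j.+1 < n)%N by apply: ltn_trans hij (ltn_ord i).
have [At Ad] := A_trig.
have E : forall i', \sum_l u i' l * A l j = d i' * u i' j.
  by move=> i'; rewrite -Mu -uA mxE.
have hz : forall i' (l : 'I_n), (l < j)%N -> u i' l * A l j = 0.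
  by move=> i' l hl; rewrite At ?mulr0.
have E1 := E (nxt j); rewrite (split3 hn (hz _)) in E1.
rewrite big1 ?addr0 in E1; last first.
  by move=> l hl; rewrite hu.2 ?mul0r // nxtE.
rewrite hu.1 Ad mul1r in E1.
have E2 := E i; rewrite (split3 hn (hz _)) Ad in E2.
have HA : A (nxt j) j = d (nxt j) * u (nxt j) j - u (nxt j) j * d j.
  by rewrite -E1; ring.
rewrite HA in E2.
have -> : \sum_(l : 'I_n | (j.+1 < l)%N) u i l * A l j =
   d i * u i j - (u i j * d j + u i (nxt j) * (d (nxt j) * u (nxt j) j - u (nxt j) j * d j)).
  by rewrite -E2; ring.
rewrite /fgen; ring.
Qed.

Lemma A_sum (i j : 'I_n) : (j.+1 < i)%N ->
  A i j = \sum_(l : 'I_n | (j.+1 < l)%N) invmx u i l * fgen u d l j.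
Proof.
move=> hij.
pose Lm : 'M[T]_n := \matrix_(a, b) if (b.+1 < a)%N then A a b else 0.
have hF : forall l : 'I_n, (u *m Lm) l j = if (j.+1 < l)%N then fgen u d l j else 0.
  move=> l; rewrite mxE.
  have -> : \sum_k u l k * Lm k j = \sum_(k : 'I_n | (j.+1 < k)%N) u l k * A k j.
    by rewrite [RHS]big_mkcond /=; apply: eq_bigr => k _; rewrite mxE; case: ifP; rewrite ?mulr0.
  case: ifP => hl; first by rewrite fgen_sum.
  rewrite big1 // => k hk; rewrite hu.2 ?mul0r //.
  by move: hl => /negbT; rewrite -leqNgt => hl; apply: leq_ltn_trans hk.
have : Lm = invmx u *m (u *m Lm).
  by rewrite mulmxA mulVmx ?mul1mx //; apply: lunit_unit.
move/(congr1 (fun X : 'M[T]_n => X i j)); rewrite mxE hij => ->.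
rewrite mxE [RHS]big_mkcond /=; apply: eq_bigr => l _.
by rewrite hF; case: ifP; rewrite ?mulr0.
Qed.

End GenMx.

End B.
Import B.

Module C.
Set Implicit Arguments.
Unset Strict Implicit.
Unset Printing Implicit Defensive.
Import Order.TTheory GRing.Theory Num.Theory.

Lemma perm_conj (T : comUnitRingType) n (S : 'M[T]_n) (w : 'S_n) :
  invmx (perm_mx w) *m S *m perm_mx w = \matrix_(i, j) S (w^-1 i)%g (w^-1 j)%g.
Proof.
have hQ : perm_mx w^-1 *m perm_mx w = 1%:M :> 'M[T]_n.
  by rewrite -perm_mxM mulVg perm_mx1.
have -> : invmx (perm_mx w) = perm_mx w^-1 :> 'M[T]_n.
  have hP := unitmx_perm T w.
  by rewrite -[RHS]mulmx1 -(mulmxV hP) mulmxA hQ mul1mx.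
rewrite -row_permE.
have -> : perm_mx w = perm_mx (w^-1)^-1 :> 'M[T]_n by rewrite invgK.
rewrite -col_permE.
by apply/matrixP => i j; rewrite !mxE.
Qed.

Section Setup.
Variable K : fieldType.
Variable n : nat.
Local Notation k := (nv n).
Local Notation MP := {mpoly K[nv n]}.

Definition rw (v : 'I_k) : 'I_n := (val (enum_val v)).1.
Definition cl (v : 'I_k) : 'I_n := (val (enum_val v)).2.
Lemma cl_lt_rw v : (cl v < rw v)%N.
Proof. exact: (valP (enum_val v)). Qed.

Definition vid (i j : 'I_n) (h : (j < i)%N) : 'I_k :=
  enum_rank (Sub (i, j) h : Lidx n).

Lemma rw_vid (i j : 'I_n) h : rw (@vid i j h) = i.
Proof. by rewrite /rw /vid enum_rankK. Qed.
Lemma cl_vid (i j : 'I_n) h : cl (@vid i j h) = j.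
Proof. by rewrite /cl /vid enum_rankK. Qed.

Lemma vid_rw v (h : (cl v < rw v)%N) : vid h = v.
Proof.
rewrite /vid -[RHS]enum_valK; congr enum_rank; apply: val_inj => /=.
by rewrite /rw /cl -surjective_pairing.
Qed.

Local Notation U := (genU K n).

Lemma U_low (i j : 'I_n) (h : (j < i)%N) : U i j = 'X_(vid h).
Proof.
rewrite /genU mxE; case: insubP => [p hp hv|]; last by rewrite /= h.
by rewrite /vid; congr ('X_(enum_rank _)); apply: val_inj.
Qed.

Lemma U_var v : U (rw v) (cl v) = 'X_v.
Proof. by rewrite (U_low (cl_lt_rw v)) vid_rw. Qed.

Lemma U_up (i j : 'I_n) : ~~ (j < i)%N -> U i j = (i == j)%:R.
Proof.
move=> h; rewrite /genU mxE; case: insubP => [p hp hv|//].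
by move: hp h; rewrite /= => ->.
Qed.

Lemma lunit_U : lunit U.
Proof.
split => [i|i j hij]; first by rewrite U_up ?ltnn ?eqxx.
rewrite U_up; last by rewrite -leqNgt ltnW.
by case: eqP => // hh; move: hij; rewrite hh ltnn.
Qed.

Lemma evalU_map (x : 'I_k -> K) : evalU x = map_mx (meval x) U.
Proof.
apply/matrixP => i j; rewrite !mxE.
case: (insub _) => [p|]; first by rewrite mevalXU.
by rewrite rmorph_nat.
Qed.

Lemma lunit_evalU (x : 'I_k -> K) : lunit (evalU x).
Proof.
have [h1 h2] := lunit_U; rewrite evalU_map.
by split => [i|i j hij]; rewrite mxE ?h1 ?h2 ?rmorph1 ?rmorph0.
Qed.

End Setup.

End C.
Import C.

Module D.
Set Implicit Arguments.
Unset Strict Implicit.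
Unset Printing Implicit Defensive.
Import Order.TTheory GRing.Theory Num.Theory.

Section Main1.
Variable K : fieldType.
Variable n : nat.
Variable S : 'M[K]_n.
Hypothesis hS : is_diag_mx S.
Variable w : 'S_n.
Local Notation k := (nv n).
Local Notation MP := {mpoly K[nv n]}.
Local Notation U := (genU K n).

Definition d (i : 'I_n) : K := S (w^-1 i)%g (w^-1 i)%g.
Definition dP (i : 'I_n) : MP := (d i)%:MP.

Lemma hMk i j : (invmx (perm_mx w) *m S *m perm_mx w) i j = if i == j then d i else 0.
Proof.
rewrite perm_conj mxE /d; case: eqP => [->//|hij].
by move/is_diag_mxP: hS; apply; apply/eqP => hh; apply: hij; have := congr1 (fun t => w t) (val_inj hh); rewrite /= !permKV.
Qed.

Lemma hMP i j : (invmx (perm_mx w) *m map_mx (fun c => c%:MP) S *m perm_mx w) i j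
   = if i == j then dP i else 0 :> MP.
Proof.
rewrite perm_conj !mxE /dP /d; case: eqP => [->//|hij].
by move/is_diag_mxP: hS => ->; last by apply/eqP => hh; apply: hij; have := congr1 (fun t => w t) (val_inj hh); rewrite /= !permKV.
Qed.

Definition fpol (i j : 'I_n) : MP := fgen U dP i j.

Lemma Amat_eq : Amat S w = invmx U *m (invmx (perm_mx w) *m map_mx (fun c => c%:MP) S *m perm_mx w) *m U.
Proof. by rewrite /Amat !mulmxA. Qed.

Definition Pf : pred MP := [pred g | [exists i : 'I_n, exists j : 'I_n, (j.+1 < i)%N && (g == fpol i j)]].

Lemma Iw_iff f : Iw S w f <-> ideal_gen Pf f.
Proof.
split; apply: ig_trans => g /=.
  move=> /existsP[i /existsP[j /andP[hij /eqP ->]]].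
  rewrite Amat_eq (A_sum (lunit_U K n) hMP hij); apply: ig_big => l hl.
  by apply: igM; apply: igG; apply/existsP; exists l; apply/existsP; exists j; rewrite hl eqxx.
move=> /existsP[i /existsP[j /andP[hij /eqP ->]]].
rewrite /fpol (fgen_sum (lunit_U K n) hMP hij) -Amat_eq.
apply: ig_big => l hl.
by apply: igM; apply: igG; apply/existsP; exists l; apply/existsP; exists j; rewrite hl eqxx.
Qed.

Lemma fpol_eval (x : 'I_k -> K) i j : (fpol i j).@[x] = fgen (evalU x) d i j.
Proof.
by rewrite /fpol /fgen evalU_map !mxE !(rmorphB, rmorphM) /dP /= !mevalC.
Qed.

Lemma patch_iff (x : 'I_k -> K) :
  patch S w x <-> forall i j : 'I_n, (j.+1 < i)%N -> fgen (evalU x) d i j = 0.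
Proof.
rewrite /patch /in_HDelta.
have -> : invmx (evalU x) *m invmx (perm_mx w) *m S *m perm_mx w *m evalU x =
  invmx (evalU x) *m (invmx (perm_mx w) *m S *m perm_mx w) *m evalU x by rewrite !mulmxA.
split => h i j hij.
  rewrite (fgen_sum (lunit_evalU x) hMk hij) big1 // => l hl; by rewrite h ?mulr0.
rewrite (A_sum (lunit_evalU x) hMk hij) big1 // => l hl; by rewrite h ?mulr0.
Qed.

Lemma I_vanish f : ideal_gen Pf f -> forall x, patch S w x -> f.@[x] = 0.
Proof.
move=> [s [hs ->]] x /patch_iff hx; rewrite rmorph_sum big1_seq //= => p hp.
move/allP: hs => /(_ p hp) /= /existsP[i /existsP[j /andP[hij /eqP ->]]].
by rewrite rmorphM /= fpol_eval hx ?mulr0.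
Qed.

End Main1.

End D.
Import D.

Module F.
Set Implicit Arguments.
Unset Strict Implicit.
Unset Printing Implicit Defensive.
Import Order.TTheory GRing.Theory Num.Theory.

Definition enc (b : nat) (s : seq nat) : nat := foldr (fun a acc => a + b * acc)%N 0%N s.

Lemma enc_inj b s s' : size s = size s' -> all (fun a => a < b)%N s ->
  all (fun a => a < b)%N s' -> enc b s = enc b s' -> s = s'.
Proof.
elim: s s' => [|a s IH] [|a' s'] //= [hs] /andP[ha hs1] /andP[ha' hs1'] he.
have hb : (0 < b)%N by apply: leq_ltn_trans ha.
have e1 : a = a'.
  have := congr1 (fun x => x %% b)%N he => /=.
  by rewrite ![(_ + b * _)%N]addnC mulnC modnMDl mulnC modnMDl !modn_small.
subst a'; congr (_ :: _); apply: IH => //.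
by apply/eqP; rewrite -(eqn_pmul2l hb) -(eqn_add2l a) he.
Qed.

Lemma sum_enc b s : (\sum_(i < size s) nth 0%N s i * b ^ i)%N = enc b s.
Proof.
elim: s => [|a s IH]; first by rewrite big_ord0.
rewrite /= big_ord_recl /= expn0 muln1 -IH big_distrr /=; congr (_ + _)%N.
by apply: eq_bigr => i _; rewrite add0n /bump leq0n add1n expnS mulnCA.
Qed.

Section PIT.
Variable K : idomainType.
Hypothesis hK : forall a b : nat, (a%:R == b%:R :> K) = (a == b).

Lemma pit k (p : {mpoly K[k]}) : (forall x, p.@[x] = 0) -> p = 0.
Proof.
move=> hp.
pose b := msize p.
pose psi (m : 'X_{1..k}) := enc b (val m).
have hdig : forall m, m \in msupp p -> all (fun a => a < b)%N (val m).
  move=> m hm; apply/allP => a ha.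
  apply: leq_ltn_trans (msize_mdeg_lt hm).
  rewrite mdegE; move: ha => /(nthP 0%N) [i hi <-].
  rewrite size_tuple in hi.
  rewrite (bigD1 (Ordinal hi)) //= (mnm_nth 0%N) /=; exact: leq_addr.
pose q : {poly K} := \sum_(m <- msupp p) p@_m *: 'X^(psi m).
have hq : forall t : K, q.[t] = p.@[fun i => t ^+ (b ^ i)].
  move=> t; rewrite mevalE /q horner_sum; apply: eq_bigr => m _.
  rewrite hornerZ hornerXn; congr (_ * _).
  under eq_bigr do rewrite -exprM.
  rewrite prodrXr; congr (_ ^+ _).
  rewrite /psi -sum_enc size_tuple; apply: eq_bigr => i _.
  by rewrite (mnm_nth 0%N) mulnC.
have q0 : q = 0.
  apply: (@roots_geq_poly_eq0 _ q [seq (i%:R : K) | i <- iota 0 (size q)]).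
  - by apply/allP => t /mapP [i _ ->]; rewrite /root hq hp.
  - rewrite map_inj_in_uniq ?iota_uniq // => x y _ _ /eqP; rewrite hK => /eqP //.
  - by rewrite size_map size_iota.
apply: msuppnil0; case hs: (msupp p) => [|mu s] //.
have hmu : mu \in msupp p by rewrite hs mem_head.
have := congr1 (fun r : {poly K} => r`_(psi mu)) q0.
rewrite coef0 /q coef_sum (bigD1_seq mu) ?msupp_uniq //= coefZ coefXn eqxx mulr1.
rewrite big1_seq ?addr0; last first.
  move=> m /andP[hm hin]; rewrite coefZ coefXn.
  case: eqP => [he|]; last by rewrite mulr0.
  suff : m = mu by move/eqP: hm.
  apply: val_inj; apply: val_inj; apply: (@enc_inj b).
  - by rewrite !size_tuple.
  - exact: hdig.
  - exact: hdig.
  - exact: (esym he).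
by move/eqP; rewrite mcoeff_eq0 hmu.
Qed.

Lemma mono_null k (Ns : seq 'X_{1..k}) (P : {mpoly K[k]}) :
  (forall nu, nu \in Ns -> forall i, (nu i <= 1)%N) ->
  (forall y, (forall nu, nu \in Ns -> ('X_[nu] : {mpoly K[k]}).@[y] = 0) -> P.@[y] = 0) ->
  forall mu, mu \in msupp P -> exists2 nu, nu \in Ns & (nu <= mu)%MM.
Proof.
move=> hsq hP mu hmu.
case: (boolP (has (fun nu => (nu <= mu)%MM) Ns)) => [/hasP[nu h1 h2]|hn].
  by exists nu.
exfalso.
pose s i := (0 < mu i)%N.
pose z (y : 'I_k -> K) i := if s i then y i else 0.
pose Q := \sum_(m <- msupp P | [forall i, (0 < m i)%N ==> s i]) P@_m *: ('X_[m] : {mpoly K[k]}).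
have hQ : forall y, Q.@[y] = P.@[z y].
  move=> y; rewrite [RHS]mevalE /Q raddf_sum /= big_mkcond /=; apply: eq_bigr => m _.
  case: ifP => hm.
    rewrite mevalZ mevalX; congr (_ * _); apply: eq_bigr => i _.
    rewrite /z; case: ifP => // hsi.
    move/forallP: hm => /(_ i); rewrite hsi implybF -eqn0Ngt => /eqP ->.
    by rewrite !expr0.
  move/negbT: hm; rewrite negb_forall => /existsP[t]; rewrite negb_imply => /andP[hmi hsi].
  rewrite (bigD1 t) //= /z (negbTE hsi) expr0n.
  by move: hmi; rewrite lt0n => /negbTE ->; rewrite !mul0r mulr0.
have Q0 : Q = 0.
  apply: pit => y; rewrite hQ; apply: hP => nu hnu.
  have : ~~ (nu <= mu)%MM by apply: contra hn => h; apply/hasP; exists nu.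
  rewrite /lem negb_forall => /existsP[t]; rewrite -ltnNge => hi.
  have hmu0 : mu t = 0%N by have := hsq nu hnu t; lia.
  rewrite mevalX (bigD1 t) //= /z /s hmu0 /= expr0n.
  have -> : (nu t == 0%N) = false by lia.
  by rewrite mul0r.
have := congr1 (mcoeff mu) Q0; rewrite mcoeff0 /Q raddf_sum /=.
rewrite big_mkcond /= (bigD1_seq mu) ?msupp_uniq //=.
have -> : [forall i, (0 < mu i)%N ==> s i] by apply/forallP => i; apply/implyP.
rewrite mcoeffZ mcoeffX eqxx mulr1 big1 ?addr0.
  by move/eqP; rewrite mcoeff_eq0 hmu.
move=> m hm; case: ifP => // _; rewrite mcoeffZ mcoeffX.
by case: eqP => [he|]; [move: hm; rewrite he eqxx | rewrite mulr0].
Qed.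

End PIT.

End F.
Import F.

Module E.
Set Implicit Arguments.
Unset Strict Implicit.
Unset Printing Implicit Defensive.
Import Order.TTheory GRing.Theory Num.Theory.

Section Sigma.
Variable K : fieldType.
Variable n : nat.
Variable S : 'M[K]_n.
Variable w : 'S_n.
Local Notation k := (nv n).
Local Notation MP := {mpoly K[nv n]}.
Local Notation U := (genU K n).
Local Notation d := (d S w).
Local Notation fpol := (fpol S w).
Local Notation Pf := (Pf S w).
Local Notation I := (ideal_gen Pf).

Definition Tp (i j : 'I_n) : bool := (j.+1 < i)%N && (d i != d j).
Definition cc (i j : 'I_n) : K := (d (nxt j) - d j) / (d i - d j).

Definition mU (i j : 'I_n) : 'X_{1..k} :=
  match @insub _ (fun p : 'I_n * 'I_n => (p.2 < p.1)%N) (Lidx n) (i, j) with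
  | Some p => U_(enum_rank p)%MM | None => 0%MM end.
Definition cU (i j : 'I_n) : K :=
  match @insub _ (fun p : 'I_n * 'I_n => (p.2 < p.1)%N) (Lidx n) (i, j) with
  | Some p => 1 | None => (i == j)%:R end.

Lemma U_mono (i j : 'I_n) : U i j = cU i j *: 'X_[mU i j].
Proof.
rewrite /genU /cU /mU mxE; case: (insub _) => [p|]; first by rewrite scale1r.
by rewrite mpolyX0 scaler_nat.
Qed.

Lemma mU_prop (i j : 'I_n) v : (mU i j v <= 1)%N /\
  ((0 < mU i j v)%N -> [/\ (j < i)%N, rw v = i & cl v = j]).
Proof.
rewrite /mU; case: insubP => [p hp hv|]; last by rewrite mnm0E.
rewrite mnm1E; case: eqP => // <-; split => // _.
by rewrite /rw /cl enum_rankK hv.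
Qed.

Lemma cU_low (i j : 'I_n) : (j < i)%N -> cU i j = 1.
Proof. by move=> h; rewrite /cU; case: insubP => //= hn; rewrite h in hn. Qed.

Fixpoint gfp (m : nat) (i j : 'I_n) : K * 'X_{1..k} :=
  if m is m'.+1 then
    (if Tp i j then (cc i j * (gfp m' i (nxt j)).1, (mU (nxt j) j + (gfp m' i (nxt j)).2)%MM)
     else (cU i j, mU i j))
  else (cU i j, mU i j).

Lemma Tp_nxt (i j : 'I_n) : Tp i j -> nat_of_ord (nxt j) = j.+1.
Proof.
by case/andP => h _; apply: nxtE; apply: ltn_trans h (ltn_ord i).
Qed.

Lemma gfp_stab m1 m2 (i j : 'I_n) : (i - j <= m1)%N -> (i - j <= m2)%N ->
  gfp m1 i j = gfp m2 i j.
Proof.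
elim: m1 m2 j => [|m1 IH] [|m2] j /= h1 h2 //.
- by case: ifP => // /andP[h _]; move: h1; lia.
- by case: ifP => // /andP[h _]; move: h2; lia.
- case: ifP => // hT; rewrite (IH m2) //; move: (Tp_nxt hT) h1 h2; lia.
Qed.

Definition gp (i j : 'I_n) := gfp n i j.

Lemma gp_unfold (i j : 'I_n) : gp i j = if Tp i j then
  (cc i j * (gp i (nxt j)).1, (mU (nxt j) j + (gp i (nxt j)).2)%MM) else (cU i j, mU i j).
Proof.
have hi := ltn_ord i.
rewrite /gp (@gfp_stab n (i - j).+1) /=; [|lia|lia].
case: ifP => // hT; rewrite (@gfp_stab (i - j) n) //; move: (Tp_nxt hT); lia.
Qed.

Definition g (i j : 'I_n) : MP := (gp i j).1 *: 'X_[(gp i j).2].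

Lemma g_unfold (i j : 'I_n) : g i j = if Tp i j then cc i j *: (U (nxt j) j * g i (nxt j)) else U i j.
Proof.
rewrite /g gp_unfold; case: ifP => hT /=; last by rewrite U_mono.
have hj : (j < nxt j)%N by rewrite (Tp_nxt hT).
rewrite U_mono cU_low // scale1r mpolyXD -scalerA scalerAr.
by [].
Qed.

Lemma gp_prop (i j : 'I_n) : (forall v, ((gp i j).2 v <= 1)%N) /\
  (forall v, (0 < (gp i j).2 v)%N -> (j <= cl v)%N /\ ~~ Tp (rw v) (cl v)).
Proof.
suff : forall m (j : 'I_n), (i - j <= m)%N -> (forall v, ((gp i j).2 v <= 1)%N) /\
  (forall v, (0 < (gp i j).2 v)%N -> (j <= cl v)%N /\ ~~ Tp (rw v) (cl v)).
  by move=> H; apply: (H (i - j)%N).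
elim=> [|m IH] {}j hm; rewrite gp_unfold; case: ifP => hT /=.
- by move: hT => /andP[h _]; move: hm; lia.
- split => v; first by case: (mU_prop i j v).
  by case: (mU_prop i j v) => _ h /h [_ -> ->]; rewrite hT.
- move: (Tp_nxt hT) => hn.
  have [h1 h2] := IH (nxt j) (ltac:(move: hm; rewrite hn; lia)).
  split => v; rewrite mnmDE.
  + have [a1 a2] := mU_prop (nxt j) j v.
    case: (posnP (mU (nxt j) j v)) => ha; first by rewrite ha add0n.
    have [_ _ hc] := a2 ha.
    case: (posnP ((gp i (nxt j)).2 v)) => hb; first by rewrite hb addn0.
    by have := (h2 v hb).1; rewrite hc hn; lia.
  + case: (posnP (mU (nxt j) j v)) => ha.
    * rewrite ha add0n => hb; have [h3 h4] := h2 v hb; split => //.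
      by move: h3; rewrite hn; lia.
    * move=> _; have [_ /(_ ha) [_ hr hc]] := mU_prop (nxt j) j v.
      by rewrite hr hc; split => //; rewrite /Tp hn ltnn.
- split => v; first by case: (mU_prop i j v).
  by case: (mU_prop i j v) => _ h /h [_ -> ->]; rewrite hT.
Qed.


Lemma fpol_in (i j : 'I_n) : (j.+1 < i)%N -> I (fpol i j).
Proof.
move=> h; apply: igG; apply/existsP; exists i; apply/existsP; exists j.
by rewrite h eqxx.
Qed.

Lemma g_sub_U (i j : 'I_n) : I (g i j - U i j).
Proof.
suff : forall m (j : 'I_n), (i - j <= m)%N -> I (g i j - U i j).
  by move=> H; apply: (H (i - j)%N).
elim=> [|m IH] {}j hm; rewrite g_unfold; case: ifP => hT.
- by move: hT => /andP[h _]; move: hm; lia.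
- by rewrite subrr; apply: ig0.
- move: (Tp_nxt hT) => hn.
  have IH' := IH (nxt j) (ltac:(move: hm; rewrite hn; lia)).
  have hne : d i - d j != 0 by move: hT => /andP[_]; rewrite subr_eq0.
  set E := (d i - d j)%:MP : MP.
  set Ei := ((d i - d j)^-1)%:MP : MP.
  set Dn := (d (nxt j) - d j)%:MP : MP.
  have H : Ei * E = 1 by rewrite /Ei /E -rmorphM /= mulVf.
  have hcc : (cc i j)%:MP = Dn * Ei by rewrite /cc rmorphM.
  have -> : cc i j *: (U (nxt j) j * g i (nxt j)) - U i j =
      ((cc i j)%:MP * U (nxt j) j) * (g i (nxt j) - U i (nxt j)) - Ei * fpol i j.
    rewrite /fpol /fgen /dP -!rmorphB -/E -/Dn -mul_mpolyC hcc.
    apply/eqP; rewrite -subr_eq0.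
    rewrite (_ : _ - _ = (Ei * E - 1) * U i j); first by rewrite H subrr mul0r.
    ring.
  apply: igB; first by apply: igM.
  by apply: igM; apply: fpol_in; move: hT => /andP[].
- by rewrite subrr; apply: ig0.
Qed.


Definition lq : k.-tuple MP := [tuple g (rw v) (cl v) | v < k].
Local Notation sig p := (p \mPo lq).

Lemma sig_X v : sig 'X_v = g (rw v) (cl v).
Proof. by rewrite comp_mpolyXU -tnth_nth tnth_mktuple. Qed.

Lemma sig_C c : sig c%:MP = c%:MP.
Proof. by rewrite comp_mpolyC. Qed.

Lemma sig_U (i j : 'I_n) : sig (U i j) = g i j.
Proof.
case: (ltnP j i) => h; first by rewrite (U_low K h) sig_X rw_vid cl_vid.
have hT : Tp i j = false by rewrite /Tp; apply/negbTE; apply/nandP; left; lia.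
rewrite g_unfold hT (U_up K); last by rewrite -leqNgt.
by rewrite rmorph_nat.
Qed.

Lemma sig_mul a b : I (a - sig a) -> I (b - sig b) -> I (a * b - sig (a * b)).
Proof.
move=> ha hb; rewrite rmorphM /=.
have -> : a * b - sig a * sig b = a * (b - sig b) + sig b * (a - sig a) by ring.
by apply: igD; apply: igM.
Qed.

Lemma sig_diff p : I (p - sig p).
Proof.
have h1 : I (1 - sig 1) by rewrite rmorph1 subrr; apply: ig0.
have hX : forall m, I ('X_[m] - sig 'X_[m]).
  move=> m; rewrite mpolyXE_id.
  apply: (big_ind (fun x => I (x - sig x))) => //; first exact: sig_mul.
  move=> v _; elim: (m v) => [|e IH]; first by rewrite expr0.
  rewrite exprS; apply: sig_mul => //.
  rewrite sig_X -(U_var K) -opprB; apply: igN; exact: g_sub_U.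
elim/mpolyind: p => [|c m p _ _ IH]; first by rewrite raddf0 subrr; apply: ig0.
rewrite raddfD /= comp_mpolyZ.
have -> : c *: 'X_[m] + p - (c *: sig 'X_[m] + sig p) =
    c%:MP * ('X_[m] - sig 'X_[m]) + (p - sig p).
  by rewrite -!mul_mpolyC; ring.
by apply: igD => //; apply: igM.
Qed.

Lemma sig_fgen (i j : 'I_n) : sig (fpol i j) =
  (dP S w i - dP S w j) * g i j - (dP S w (nxt j) - dP S w j) * (g (nxt j) j * g i (nxt j)).
Proof. by rewrite /fpol /fgen !(rmorphB, rmorphM) /= /dP !sig_C !sig_U. Qed.

Lemma g_nxt (j : 'I_n) : g (nxt j) j = U (nxt j) j.
Proof.
have h : (nxt j <= j.+1)%N by rewrite /nxt val_insubd; case: ifP => // _; exact: leqnSn.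
by rewrite g_unfold /Tp ltnNge h.
Qed.

Lemma sig_fpol_T (i j : 'I_n) : Tp i j -> sig (fpol i j) = 0.
Proof.
move=> hT; rewrite sig_fgen g_nxt (g_unfold i j) hT /dP -!rmorphB -mul_mpolyC.
have hne : d i - d j != 0 by move: hT => /andP[_]; rewrite subr_eq0.
have -> : (cc i j)%:MP = (d (nxt j) - d j)%:MP * ((d i - d j)^-1)%:MP :> MP.
  by rewrite /cc rmorphM.
have H : (d i - d j)%:MP * ((d i - d j)^-1)%:MP = 1 :> MP by rewrite -rmorphM /= mulfV.
apply/eqP; rewrite -subr_eq0 subr0.
rewrite (_ : _ - _ = ((d i - d j)%:MP * ((d i - d j)^-1)%:MP - 1) *
   ((d (nxt j) - d j)%:MP * (U (nxt j) j * g i (nxt j)))); first by rewrite H subrr mul0r.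
ring.
Qed.

Definition kap (i j : 'I_n) : K := - (d (nxt j) - d j) * (gp i (nxt j)).1.
Definition nu (i j : 'I_n) : 'X_{1..k} := (mU (nxt j) j + (gp i (nxt j)).2)%MM.

Lemma sig_fpol_Z (i j : 'I_n) : (j.+1 < i)%N -> ~~ Tp i j -> sig (fpol i j) = kap i j *: 'X_[nu i j].
Proof.
move=> h hT.
have hd : d i = d j by move: hT; rewrite /Tp h /= negbK => /eqP.
have hn : nat_of_ord (nxt j) = j.+1 by apply: nxtE; apply: ltn_trans h (ltn_ord i).
rewrite sig_fgen g_nxt /dP hd subrr mul0r sub0r -rmorphB -mul_mpolyC.
rewrite U_mono cU_low ?hn // scale1r /g /kap /nu mpolyXD.
rewrite -scalerAr -mul_mpolyC /= rmorphM rmorphN /=; ring.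
Qed.

Lemma nu_prop (i j : 'I_n) : (j.+1 < i)%N -> (forall v, ((nu i j) v <= 1)%N) /\ (forall v, (0 < (nu i j) v)%N -> ~~ Tp (rw v) (cl v)).
Proof.
move=> h; have hn : nat_of_ord (nxt j) = j.+1 by apply: nxtE; apply: ltn_trans h (ltn_ord i).
have [h1 h2] := gp_prop i (nxt j).
split => v; rewrite /nu mnmDE.
+ have [a1 a2] := mU_prop (nxt j) j v.
  case: (posnP (mU (nxt j) j v)) => ha; first by rewrite ha add0n.
  have [_ _ hc] := a2 ha.
  case: (posnP ((gp i (nxt j)).2 v)) => hb; first by rewrite hb addn0.
  by have := (h2 v hb).1; rewrite hc hn; lia.
+ case: (posnP (mU (nxt j) j v)) => ha.
  * by rewrite ha add0n => hb; have [h3 h4] := h2 v hb.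
  * move=> _; have [_ /(_ ha) [_ hr hc]] := mU_prop (nxt j) j v.
    by rewrite hr hc /Tp hn ltnn.
Qed.

End Sigma.

End E.
Import E.

Module G.
Set Implicit Arguments.
Unset Strict Implicit.
Unset Printing Implicit Defensive.
Import Order.TTheory GRing.Theory Num.Theory.

Section Vanish.
Variable K : fieldType.
Hypothesis hK : forall a b : nat, (a%:R == b%:R :> K) = (a == b).
Variable n : nat.
Variable S : 'M[K]_n.
Hypothesis hS : is_diag_mx S.
Variable w : 'S_n.
Local Notation k := (nv n).
Local Notation MP := {mpoly K[nv n]}.
Local Notation U := (genU K n).
Local Notation d := (d S w).
Local Notation fpol := (fpol S w).
Local Notation Pf := (Pf S w).
Local Notation I := (ideal_gen Pf).
Local Notation Tp := (Tp S w).
Local Notation kap := (kap S w).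
Local Notation nu := (nu S w).
Local Notation lq := (lq S w).
Local Notation sig p := (p \mPo lq).

Definition Zp (i j : 'I_n) := [&& (j.+1 < i)%N, ~~ Tp i j & kap i j != 0].
Definition Nset : seq 'X_{1..k} :=
  [seq nu p.1 p.2 | p <- enum [pred p : 'I_n * 'I_n | Zp p.1 p.2]].

Lemma NsetP nu0 : nu0 \in Nset -> exists i j, Zp i j /\ nu0 = nu i j.
Proof.
by case/mapP => [[i j]]; rewrite mem_enum /= => hz ->; exists i, j.
Qed.

Lemma Nset_sqf nu0 : nu0 \in Nset -> forall v, (nu0 v <= 1)%N.
Proof.
by case/NsetP => i [j [/and3P[h _ _] ->]]; case: (nu_prop S w h).
Qed.

Lemma Nset_free nu0 : nu0 \in Nset -> forall v, (0 < nu0 v)%N -> ~~ Tp (rw v) (cl v).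
Proof.
by case/NsetP => i [j [/and3P[h _ _] ->]]; case: (nu_prop S w h).
Qed.

Lemma sig_in (p : MP) : I p -> I (sig p).
Proof.
move=> hp; have -> : sig p = p - (p - sig p) by ring.
by apply: igB => //; apply: sig_diff.
Qed.

Lemma Nset_I nu0 : nu0 \in Nset -> I 'X_[nu0].
Proof.
case/NsetP => i [j [/and3P[h hT hk] ->]].
have -> : 'X_[nu i j] = ((kap i j)^-1)%:MP * sig (fpol i j).
  by rewrite sig_fpol_Z // mul_mpolyC scalerA mulVf // scale1r.
by apply: igM; apply: sig_in; apply: fpol_in.
Qed.

Definition ext (y : 'I_k -> K) : 'I_k -> K := fun v => (tnth lq v).@[y].

Lemma ext_eval (p : MP) y : p.@[ext y] = (sig p).@[y].
Proof. by rewrite comp_mpoly_meval. Qed.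

Lemma ext_patch y : (forall nu0, nu0 \in Nset -> ('X_[nu0] : MP).@[y] = 0) ->
  patch S w (ext y).
Proof.
move=> hy; apply/(patch_iff hS) => i j h.
rewrite -fpol_eval ext_eval.
case: (boolP (Tp i j)) => hT; first by rewrite sig_fpol_T // meval0.
rewrite sig_fpol_Z // mevalZ.
case: (eqVneq (kap i j) 0) => hk; first by rewrite hk mul0r.
rewrite hy ?mulr0 //; apply/mapP; exists (i, j) => //.
by rewrite mem_enum inE /= /Zp h hT hk.
Qed.

Lemma vanish_supp (f : MP) : (forall x, patch S w x -> f.@[x] = 0) ->
  forall mu, mu \in msupp (sig f) -> exists2 nu0, nu0 \in Nset & (nu0 <= mu)%MM.
Proof.
move=> hf; apply: (mono_null hK) => //; first exact: Nset_sqf.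
by move=> y hy; rewrite -ext_eval; apply: hf; apply: ext_patch.
Qed.

Lemma vanish_I (f : MP) : (forall x, patch S w x -> f.@[x] = 0) -> I f.
Proof.
move=> hf; have -> : f = (f - sig f) + sig f by ring.
apply: igD; first exact: sig_diff.
rewrite [sig f]mpolyE; apply: ig_big => mu _.
case: (boolP (mu \in msupp (sig f))) => hmu; last first.
  by move: hmu; rewrite mcoeff_msupp negbK => /eqP ->; rewrite scale0r; apply: ig0.
have [nu0 hn hle] := vanish_supp hf hmu.
rewrite -(submK hle) mpolyXD -mul_mpolyC mulrA.
by apply: igM; apply: Nset_I.
Qed.

End Vanish.

End G.
Import G.

Module H.
Set Implicit Arguments.
Unset Strict Implicit.
Unset Printing Implicit Defensive.
Import Order.TTheory GRing.Theory Num.Theory.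

Section Order.
Variable k : nat.
Variable om : 'I_k -> nat.

Definition wt (m : 'X_{1..k}) : nat := (\sum_v om v * m v)%N.
Definition wle (a b : 'X_{1..k}) : bool := (wt a < wt b)%N || ((wt a == wt b) && (a <= b)%O).

Lemma wtD a b : wt (a + b)%MM = (wt a + wt b)%N.
Proof. by rewrite /wt -big_split /=; apply: eq_bigr => v _; rewrite mnmDE mulnDr. Qed.

Lemma wt0 : wt 0%MM = 0%N.
Proof. by rewrite /wt big1 // => v _; rewrite mnm0E muln0. Qed.

Lemma wt1 v : wt U_(v)%MM = om v.
Proof.
rewrite /wt (bigD1 v) //= mnm1E eqxx muln1 big1 ?addn0 // => v' hv.
by rewrite mnm1E eq_sym (negbTE hv) muln0.
Qed.

Lemma wle_wt a b : wle a b -> (wt a <= wt b)%N.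
Proof. by case/orP => [/ltnW //|/andP[/eqP -> _]]. Qed.

Lemma wle_order : monomial_order wle.
Proof.
split.
- by move=> a; rewrite /wle eqxx lexx orbT.
- move=> a b /andP[]; rewrite /wle.
  case: (ltngtP (wt a) (wt b)) => //= _ h1 h2; by apply: le_anti; rewrite h1 h2.
- move=> b a c; rewrite /wle.
  case: (ltngtP (wt a) (wt b)) => //= hab; case: (ltngtP (wt b) (wt c)) => //= hbc.
  + by rewrite (ltn_trans hab hbc).
  + by rewrite -hbc hab.
  + by rewrite hab hbc.
  + by rewrite hab hbc ltnn eqxx; apply: le_trans.
- move=> a b; rewrite /wle; case: (ltngtP (wt a) (wt b)) => //= _; exact: le_total.
- split.
  + move=> a b c; rewrite /wle !wtD ltn_add2r eqn_add2r lemc_add2l //.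
  + by move=> a; rewrite /wle wt0 le0m; case: (wt a) => //= ?; rewrite orbT.
Qed.

Lemma lead_uniq (K : fieldType) (p : {mpoly K[k]}) m1 m2 : is_lead wle p m1 -> is_lead wle p m2 -> m1 = m2.
Proof.
move=> [h1 h1'] [h2 h2']; have [_ ha _ _ _] := wle_order.
by apply: ha; rewrite h1' ?h2'.
Qed.

Lemma max_exists (s : seq 'X_{1..k}) : s != [::] -> exists2 m, m \in s & forall m', m' \in s -> wle m' m.
Proof.
have [hr _ ht htot _] := wle_order.
elim: s => [//|a s IH] _.
case: (eqVneq s [::]) => [->|hs].
  by exists a; rewrite ?mem_head // => m'; rewrite inE => /eqP ->.
have [m hm hmax] := IH hs.
case/orP: (htot a m) => ham.
  exists m; first by rewrite inE hm orbT.
  by move=> m'; rewrite inE => /orP[/eqP ->|/hmax].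
exists a; first exact: mem_head.
move=> m'; rewrite inE => /orP[/eqP ->|/hmax h]; first exact: hr.
exact: ht h ham.
Qed.

Lemma lead_exists (K : fieldType) (p : {mpoly K[k]}) : p != 0 -> exists m, is_lead wle p m.
Proof.
move=> hp; have : msupp p != [::].
  by apply: contra hp => /eqP h; apply/eqP; apply: msuppnil0.
by case/max_exists => m h1 h2; exists m.
Qed.

End Order.

Section GB.
Variable K : fieldType.
Hypothesis hK : forall a b : nat, (a%:R == b%:R :> K) = (a == b).
Variable n : nat.
Variable S : 'M[K]_n.
Hypothesis hS : is_diag_mx S.
Variable w : 'S_n.
Local Notation k := (nv n).
Local Notation MP := {mpoly K[nv n]}.
Local Notation U := (genU K n).
Local Notation d := (d S w).
Local Notation fpol := (fpol S w).
Local Notation Pf := (Pf S w).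
Local Notation I := (ideal_gen Pf).
Local Notation Tp := (Tp S w).
Local Notation lq := (lq S w).
Local Notation sig p := (p \mPo lq).
Local Notation Nset := (Nset S w).

Definition om (v : 'I_k) : nat := if Tp (rw v) (cl v) then (2 ^ (n - cl v))%N else 0%N.
Local Notation le := (wle om).

Lemma mU_low (i j : 'I_n) (h : (j < i)%N) : mU i j = U_(vid h)%MM.
Proof.
rewrite /E.mU; case: insubP => [p hp hv|]; last by rewrite /= h.
by rewrite /vid; congr (U_(enum_rank _))%MM; apply: val_inj.
Qed.

Lemma fpol_mono (i j : 'I_n) : (j.+1 < i)%N ->
  fpol i j = (d i - d j) *: 'X_[mU i j] - (d (nxt j) - d j) *: 'X_[(mU (nxt j) j + mU i (nxt j))%MM].
Proof.
move=> h; have hn : nat_of_ord (nxt j) = j.+1 by apply: nxtE; apply: ltn_trans h (ltn_ord i).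
rewrite /D.fpol /fgen /dP -!rmorphB !mul_mpolyC !(U_mono K) !cU_low ?hn //; last by lia.
by rewrite !scale1r mpolyXD.
Qed.

Lemma om_vid (i j : 'I_n) (h : (j < i)%N) : om (vid h) = if Tp i j then (2 ^ (n - j))%N else 0%N.
Proof. by rewrite /om rw_vid cl_vid. Qed.

Lemma fpol_lead (i j : 'I_n) : Tp i j -> is_lead le (fpol i j) (mU i j).
Proof.
move=> hT; have h : (j.+1 < i)%N by case/andP: hT.
have hn : nat_of_ord (nxt j) = j.+1 by apply: nxtE; apply: ltn_trans h (ltn_ord i).
have hji : (j < i)%N by lia.
have hjn : (j < nxt j)%N by lia.
have hni : (nxt j < i)%N by lia.
set a := mU i j; set b := (mU (nxt j) j + mU i (nxt j))%MM.
have hjlt : (j < n)%N by apply: ltn_trans hji (ltn_ord i).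
have wa : wt om a = (2 ^ (n - j))%N by rewrite /a (mU_low hji) wt1 om_vid hT.
have wb : (wt om b < wt om a)%N.
  rewrite wa /b wtD (mU_low hjn) (mU_low hni) !wt1 !om_vid.
  rewrite (_ : Tp (nxt j) j = false); last by rewrite /E.Tp hn ltnn.
  rewrite add0n; case: ifP => _; last by rewrite expn_gt0.
  by rewrite ltn_exp2l // hn; lia.
have hab : (b == a) = false by apply/negbTE; apply: contraTneq wb => ->; rewrite ltnn.
have hne : d i - d j != 0 by move: hT => /andP[_]; rewrite subr_eq0.
rewrite (fpol_mono h) -/a -/b; split.
  by rewrite mcoeff_msupp mcoeffB !mcoeffZ !mcoeffX eqxx hab mulr0 subr0 mulr1.
move=> m /msuppB_le; rewrite mem_cat => /orP[] /msuppZ_le; rewrite msuppX inE => /eqP ->.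
  by rewrite /wle eqxx lexx orbT.
by rewrite /wle wb.
Qed.

Lemma X_lead nu0 : is_lead le ('X_[nu0] : MP) nu0.
Proof.
split; first by rewrite msuppX mem_head.
by move=> m; rewrite msuppX inE => /eqP ->; rewrite /wle eqxx lexx orbT.
Qed.

Lemma sig_free (m : 'X_{1..k}) : (forall v, (0 < m v)%N -> ~~ Tp (rw v) (cl v)) ->
  sig 'X_[m] = 'X_[m].
Proof.
move=> hm; rewrite comp_mpolyX [RHS]mpolyXE_id; apply: eq_bigr => v _.
case: (posnP (m v)) => hv; first by rewrite hv !expr0.
by rewrite tnth_mktuple g_unfold (negbTE (hm v hv)) (U_var K).
Qed.

Lemma sig_id (f : MP) : (forall m, m \in msupp f -> forall v, (0 < m v)%N -> ~~ Tp (rw v) (cl v)) ->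
  sig f = f.
Proof.
move=> hf; rewrite {1}[f]mpolyE raddf_sum /= [RHS]mpolyE big_seq [RHS]big_seq.
by apply: eq_bigr => m hm; rewrite comp_mpolyZ sig_free //; apply: hf.
Qed.

Definition Gl : seq MP :=
  [seq fpol p.1 p.2 | p <- enum [pred p : 'I_n * 'I_n | Tp p.1 p.2]] ++ [seq 'X_[nu0] | nu0 <- Nset].

Lemma GB_main : groebner_basis le (Iw S w) Gl /\ squarefree_leads le Gl.
Proof.
split; last first.
  move=> g; rewrite mem_cat => /orP[] /mapP.
    case=> [[i j]]; rewrite mem_enum inE /= => hT -> mg /lead_uniq /(_ (fpol_lead hT)) ->.
    have hji : (j < i)%N by case/andP: hT => h _; lia.
    by move=> v; rewrite (mU_low hji) mnm1E; case: eqP.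
  case=> nu0 hn -> mg /lead_uniq /(_ (X_lead nu0)) ->.
  exact: Nset_sqf hn.
split.
  move=> g; rewrite mem_cat => /orP[] /mapP.
    case=> [[i j]]; rewrite mem_enum inE /= => hT ->; apply/(Iw_iff hS w).
    by apply: fpol_in; case/andP: hT.
  by case=> nu0 hn ->; apply/(Iw_iff hS w); apply: Nset_I.
move=> f /(Iw_iff hS w) hf hf0.
have [mf [hmf hmax]] := lead_exists om hf0.
case: (boolP [exists v, (0 < mf v)%N && Tp (rw v) (cl v)]).
  case/existsP => v /andP[hv hT].
  exists (fpol (rw v) (cl v)).
    rewrite mem_cat; apply/orP; left; apply/mapP; exists (rw v, cl v) => //.
    by rewrite mem_enum inE.
  exists (mU (rw v) (cl v)), mf; split => //; first exact: fpol_lead.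
  rewrite (mU_low (cl_lt_rw v)) vid_rw; apply/mnm_lepP => v'.
  by rewrite mnm1E; case: eqP => // <-.
rewrite negb_exists => /forallP hfree.
have hfree' : forall m, m \in msupp f -> forall v, (0 < m v)%N -> ~~ Tp (rw v) (cl v).
  move=> m hm v hv; apply/negP => hT.
  have : (wt om m <= wt om mf)%N by apply: wle_wt; apply: hmax.
  have -> : wt om mf = 0%N.
    rewrite /wt big1 // => v' _; rewrite /om.
    case: ifP => hT'; last by rewrite mul0n.
    by move: (hfree v'); rewrite hT' andbT -eqn0Ngt => /eqP ->; rewrite muln0.
  rewrite leqn0 /wt sum_nat_eq0 => /forallP /(_ v) /implyP /(_ isT).
  rewrite /om hT muln_eq0 expn_eq0 /=; lia.
have hsig := sig_id hfree'.
have [nu0 hn hle] : exists2 nu0, nu0 \in Nset & (nu0 <= mf)%MM.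
  apply: (vanish_supp hK hS (f := f)).
    by move=> x hx; apply: (I_vanish hS hf).
  by rewrite hsig.
exists 'X_[nu0]; first by rewrite mem_cat; apply/orP; right; apply/mapP; exists nu0.
by exists nu0, mf; split => //; apply: X_lead.
Qed.

End GB.

End H.
Import H.

Unset Implicit Arguments.
Set Strict Implicit.
Set Printing Implicit Defensive.
Import Order.TTheory GRing.Theory Num.Theory.

Lemma patch0 (K : fieldType) n (S : 'M[K]_n) (hS : is_diag_mx S) (w : 'S_n) :
  patch S w (fun _ => 0).
Proof.
apply/(patch_iff hS) => i j h.
have hn : nat_of_ord (nxt j) = j.+1 by apply: nxtE; apply: ltn_trans h (ltn_ord i).
have E : forall a b : 'I_n, evalU (fun _ : 'I_(nv n) => 0 : K) a b = (a == b)%:R.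
  move=> a b; rewrite mxE; case: insubP => // p hp hv.
  by case: eqP => // hab; move: hp; rewrite /= hab ltnn.
have ne : forall a b : 'I_n, (a < b)%N -> (b == a) = false.
  by move=> a b hab; apply/negbTE; rewrite -val_eqE /= gtn_eqF.
rewrite /fgen !E ne ?ne ?hn //; last by lia.
by rewrite !mulr0 subrr.
Qed.

Theorem mainTheorem13 (R : realType) (n : nat) (S : 'M[R[i]]_n)
  (hS : is_diag_mx S) (w : 'S_n) :
  [/\ (exists le : rel 'X_{1..nv n}, monomial_order le /\
         exists G : seq {mpoly R[i][nv n]},
           groebner_basis le (Iw S w) G /\ squarefree_leads le G),
      radical_ideal (Iw S w)
    & forall f : {mpoly R[i][nv n]}, Iw S w f <-> vanishing_ideal (patch S w) f].
Proof.
have hK : forall a b : nat, (a%:R == b%:R :> R[i]) = (a == b).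
  by move=> a b; rewrite eqr_nat.
have hV : forall f : {mpoly R[i][nv n]}, Iw S w f <-> vanishing_ideal (patch S w) f.
  move=> f; split.
    by move=> /(Iw_iff hS w) h x hx; apply: (I_vanish hS h).
  by move=> h; apply/(Iw_iff hS w); apply: (vanish_I hK hS).
split => //.
- exists (wle (om S w)); split; first exact: wle_order.
  by exists (Gl S w); apply: (GB_main hK hS).
- move=> f m /hV hm; apply/hV => x hx.
  case: m hm => [|m] hm.
    have := hm (fun _ => 0) (@patch0 _ _ S hS w).
    by rewrite expr0 meval1 => /eqP; rewrite oner_eq0.
  by have := hm x hx; rewrite rmorphXn /= => /eqP; rewrite expf_eq0 /= => /eqP.
Qed.
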